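(* Let $G$ be a fixed connected simple undirected graph on $N\ge2$ nodes, $D=\max_i|N_i|$, and consider the system on $G$ with noise level $\eta\in(1-2/D,\,1]$. Then in the Markov chain of states $x(k)\in\{\pm1\}^N$, the states $+N$ (all $+1$) and $-N$ (all $-1$) are absorbing, and every other state is transient.
   Context: Nodes $V=\{1,\dots,N\}$ with values $x_i(k)\in\{+1,-1\}$. The neighborhood $N_i$ of node $i$ consists of $i$ and all nodes adjacent to $i$. With $v_i(k)=\frac{1}{|N_i|}\sum_{j\in N_i}x_j(k)$, the update is $x_i(k+1)=\operatorname{sign}[v_i(k)+\xi_i(k)]$, where $\xi_i(k)$ are i.i.d. uniform on $[-\eta,\eta]$ across $i$ and $k$, independent of $x(0)$. A state is absorbing if its one-step transition probability to itself is one; it is transient if, starting from it, it reappears with probability strictly less than one. *)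

(* Defs.v *)
From HB Require Import structures.
From mathcomp Require Import all_boot all_order all_algebra.
Set Implicit Arguments. Unset Strict Implicit. Unset Printing Implicit Defensive.
Import Order.TTheory GRing.Theory Num.Theory.
Local Open Scope ring_scope.

(* A state x in {+1,-1}^N is encoded as a boolean finite function:
   true <-> +1, false <-> -1. *)
Definition state (N : nat) := {ffun 'I_N -> bool}.

Definition spin (R : pzRingType) (b : bool) : R := if b then 1 else -1.

Definition nbhd (N : nat) (e : rel 'I_N) (i : 'I_N) : {set 'I_N} :=
  [set j | (j == i) || e i j].

Definition maxnbhd (N : nat) (e : rel 'I_N) : nat := (\max_(i < N) #|nbhd e i|)%N.

Definition avg (R : realFieldType) (N : nat) (e : rel 'I_N) (x : state N) (i : 'I_N) : R :=
  (\sum_(j in nbhd e i) spin R (x j)) / (#|nbhd e i|%:R).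

Definition clamp01 (R : realFieldType) (t : R) : R := Num.min 1 (Num.max 0 t).

(* P(sign(v_i + xi_i) = +1) with xi_i ~ Uniform[-eta, eta], eta > 0:
   = P(xi > -v) = clamp((v + eta) / (2 eta)) (the event v + xi = 0 is null). *)
Definition pplus (R : realFieldType) (N : nat) (e : rel 'I_N) (eta : R)
  (x : state N) (i : 'I_N) : R :=
  clamp01 ((avg R e x i + eta) / (2 * eta)).

(* one-step transition probability; the xi_i are independent across i *)
Definition trans (R : realFieldType) (N : nat) (e : rel 'I_N) (eta : R)
  (x y : state N) : R :=
  \prod_(i < N) (if y i then pplus e eta x i else 1 - pplus e eta x i).

(* avoid x m z = P(X_{m+1} = z, X_1 <> x, ..., X_{m+1} <> x | X_0 = x) *)
Fixpoint avoid (R : realFieldType) (N : nat) (e : rel 'I_N) (eta : R)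
  (x : state N) (m : nat) (z : state N) : R :=
  match m with
  | 0%N => if z == x then 0 else trans e eta x z
  | m'.+1 => if z == x then 0
             else \sum_(w : state N) avoid e eta x m' w * trans e eta w z
  end.

(* first_ret x m = P(first return time to x equals m+1 | X_0 = x) *)
Definition first_ret (R : realFieldType) (N : nat) (e : rel 'I_N) (eta : R)
  (x : state N) (m : nat) : R :=
  match m with
  | 0%N => trans e eta x x
  | m'.+1 => \sum_(w : state N) avoid e eta x m' w * trans e eta w x
  end.

Definition ret_within (R : realFieldType) (N : nat) (e : rel 'I_N) (eta : R)
  (x : state N) (n : nat) : R :=
  \sum_(m < n) first_ret e eta x m.

Definition absorbing (R : realFieldType) (N : nat) (e : rel 'I_N) (eta : R)
  (x : state N) : Prop :=
  trans e eta x x = 1.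

(* return probability = lim_n ret_within n (a nondecreasing sequence) < 1 *)
Definition transient (R : realFieldType) (N : nat) (e : rel 'I_N) (eta : R)
  (x : state N) : Prop :=
  exists c : R, c < 1 /\ forall n : nat, ret_within e eta x n <= c.

Definition all_plus (N : nat) : state N := [ffun _ => true].
Definition all_minus (N : nat) : state N := [ffun _ => false].

(* Main.v *)
Require Import Defs.
From HB Require Import structures.
From mathcomp Require Import all_boot all_order all_algebra.
Import Order.TTheory GRing.Theory Num.Theory.
Local Open Scope ring_scope.
Set Implicit Arguments. Unset Strict Implicit.

Lemma clamp_ge0 (R : realFieldType) (t : R) : 0 <= clamp01 t.
Proof. rewrite /clamp01 le_min ler01 le_max lexx //. Qed.
Lemma clamp_le1 (R : realFieldType) (t : R) : clamp01 t <= 1.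
Proof. rewrite /clamp01 ge_min lexx //. Qed.
Lemma clamp_1 (R : realFieldType) (t : R) : 1 <= t -> clamp01 t = 1.
Proof. move=> h; rewrite /clamp01 min_l // le_max h orbT //. Qed.
Lemma clamp_0 (R : realFieldType) (t : R) : t <= 0 -> clamp01 t = 0.
Proof. move=> h; rewrite /clamp01 max_l // min_r //. Qed.
Lemma clamp_gt0 (R : realFieldType) (t : R) : 0 < t -> 0 < clamp01 t.
Proof. move=> h; rewrite /clamp01 lt_min ltr01 lt_max h orbT //. Qed.

Lemma pplus_ge0 (R : realFieldType) N (e : rel 'I_N) (eta : R) x i : 0 <= pplus e eta x i.
Proof. exact: clamp_ge0. Qed.
Lemma pplus_le1 (R : realFieldType) N (e : rel 'I_N) (eta : R) x i : pplus e eta x i <= 1.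
Proof. exact: clamp_le1. Qed.

Lemma trans_ge0 (R : realFieldType) N (e : rel 'I_N) (eta : R) x y : 0 <= trans e eta x y.
Proof.
rewrite /trans; apply: prodr_ge0 => i _; case: (y i).
  exact: pplus_ge0.
by rewrite subr_ge0 pplus_le1.
Qed.

Lemma trans_sum (R : realFieldType) N (e : rel 'I_N) (eta : R) x :
  \sum_y trans e eta x y = 1.
Proof.
rewrite /trans -(bigA_distr_bigA (fun i (b : bool) => if b then pplus e eta x i else 1 - pplus e eta x i)) /= big1 // => i _.
by rewrite big_bool /= addrC subrK.
Qed.

Lemma sum_skip (R : realFieldType) (T : finType) (x : T) (f : T -> R) :
  \sum_z (if z == x then 0 else f z) = \sum_z f z - f x.
Proof.
rewrite [in RHS](bigD1 x) //= (bigD1 x) //= eqxx add0r addrAC subrr add0r.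
by apply: eq_bigr => z /negbTE ->.
Qed.

Lemma avoid_ge0 (R : realFieldType) N (e : rel 'I_N) (eta : R) x m z :
  0 <= avoid e eta x m z.
Proof.
elim: m z => [|m IH] z /=; case: (z == x) => //; first exact: trans_ge0.
by apply: sumr_ge0 => w _; apply: mulr_ge0 => //; apply: trans_ge0.
Qed.

Lemma first_ret_ge0 (R : realFieldType) N (e : rel 'I_N) (eta : R) x m :
  0 <= first_ret e eta x m.
Proof.
case: m => [|m] /=; first exact: trans_ge0.
by apply: sumr_ge0 => w _; apply: mulr_ge0; [apply: avoid_ge0|apply: trans_ge0].
Qed.

Lemma sum_avoid (R : realFieldType) N (e : rel 'I_N) (eta : R) x m :
  \sum_z avoid e eta x m z = 1 - ret_within e eta x m.+1.
Proof.
elim: m => [|m IH].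
  by rewrite /= sum_skip trans_sum /ret_within big_ord1.
rewrite /= sum_skip exchange_big /=.
have -> : \sum_j \sum_i avoid e eta x m j * trans e eta j i = \sum_j avoid e eta x m j.
  by apply: eq_bigr => j _; rewrite -mulr_sumr trans_sum mulr1.
rewrite IH /ret_within [in RHS]big_ord_recr /=.
by rewrite opprD addrA.
Qed.

Lemma ret_mono (R : realFieldType) N (e : rel 'I_N) (eta : R) x m n :
  (m <= n)%N -> ret_within e eta x m <= ret_within e eta x n.
Proof.
elim: n => [|n IH]; first by rewrite leqn0 => /eqP ->.
rewrite leq_eqVlt => /orP [/eqP -> //|]; rewrite ltnS => /IH h.
apply: (le_trans h); rewrite /ret_within big_ord_recr /= lerDl.
exact: first_ret_ge0.
Qed.

Lemma avoid_monoP (R : realFieldType) N (e : rel 'I_N) (eta : R) x P m :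
  P != x -> trans e eta P P = 1 -> avoid e eta x m P <= avoid e eta x m.+1 P.
Proof.
move=> /negbTE hP hT /=; rewrite hP (bigD1 P) //= hT mulr1 lerDl.
by apply: sumr_ge0 => w _; apply: mulr_ge0; [apply: avoid_ge0|apply: trans_ge0].
Qed.

Lemma transient_of (R : realFieldType) N (e : rel 'I_N) (eta : R) x P k :
  P != x -> trans e eta P P = 1 -> 0 < avoid e eta x k P -> transient e eta x.
Proof.
move=> hP hT hk; exists (1 - avoid e eta x k P); split.
  by rewrite ltrBlDr ltrDl.
have hmono : forall m, (k <= m)%N -> avoid e eta x k P <= avoid e eta x m P.
  move=> m; elim: m => [|m IH]; first by rewrite leqn0 => /eqP ->.
  rewrite leq_eqVlt => /orP [/eqP -> //|]; rewrite ltnS => /IH h.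
  exact: (le_trans h (avoid_monoP _ hP hT)).
have hsum : forall m, avoid e eta x m P <= \sum_z avoid e eta x m z.
  move=> m; rewrite (bigD1 P) //= lerDl.
  by apply: sumr_ge0 => w _; apply: avoid_ge0.
move=> n; case: (leqP n k.+1) => hn.
  apply: (le_trans (ret_mono e eta x hn)).
  by rewrite lerBrDl -lerBrDr -sum_avoid hsum.
case: n hn => // n; rewrite ltnS => hn.
have := sum_avoid e eta x n.
move=> h; rewrite lerBrDl -lerBrDr -h.
exact: (le_trans (hmono _ (ltnW hn)) (hsum n)).
Qed.

Lemma two_eq (R : pzRingType) : (2 : R) = 1 + 1.
Proof. by rewrite -(natrD R 1 1). Qed.

Lemma nb_gt0 N (e : rel 'I_N) i : (0 < #|nbhd e i|)%N.
Proof. by rewrite card_gt0; apply/set0Pn; exists i; rewrite inE eqxx. Qed.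

Lemma nb_le N (e : rel 'I_N) i : (#|nbhd e i| <= maxnbhd e)%N.
Proof. exact: (leq_bigmax_cond (F := fun i => #|nbhd e i|) i). Qed.

Lemma sum_lower (R : realFieldType) N (w : state N) (A : {set 'I_N}) j0 :
  j0 \in A -> w j0 -> 2 - #|A|%:R <= \sum_(j in A) spin R (w j).
Proof.
move=> hA hw.
have h : forall j, j \in A -> -1 + 2 * (j == j0)%:R <= spin R (w j).
  move=> j _; case: eqP => [->|_].
    by rewrite hw /spin mulr1 two_eq addKr.
  rewrite mulr0 addr0 /spin; case: (w j) => //.
  by rewrite -subr_ge0 opprK (ler_wpDl ler01).
apply: le_trans (ler_sum _ h).
rewrite big_split /= sumr_const -mulr_sumr (bigD1 j0) //= eqxx big1; last first.
  by move=> j /andP [_ /negbTE ->].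
by rewrite mulNrn addr0 mulr1 addrC.
Qed.

Lemma avg_const (R : realFieldType) N (e : rel 'I_N) (w : state N) i b :
  (forall j, j \in nbhd e i -> w j = b) -> avg R e w i = spin R b.
Proof.
move=> h; rewrite /avg (eq_bigr (fun _ => spin R b)); last by move=> j /h ->.
rewrite sumr_const -[spin R b *+ _]mulr_natr mulfK // pnatr_eq0 -lt0n; exact: nb_gt0.
Qed.

Lemma D_ge2 N (e : rel 'I_N) : (2 <= N)%N -> irreflexive e ->
  (forall i j : 'I_N, connect e i j) -> (2 <= maxnbhd e)%N.
Proof.
move=> hN hirr hc.
pose i0 : 'I_N := Ordinal (ltn_trans (ltnSn 0) hN).
pose i1 : 'I_N := Ordinal hN.
have : connect e i0 i1 by [].
case/connectP => [[|k p]] /=.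
  by move=> _ /(congr1 val).
case/andP => hk _ _.
have hki : k != i0 by apply: contraTneq hk => ->; rewrite hirr.
apply: leq_trans (nb_le e i0).
have -> : 2%N = #|[set i0; k]| by rewrite cards2 eq_sym hki.
apply: subset_leq_card; apply/subsetP => j; rewrite !inE.
by case/orP => /eqP ->; rewrite ?eqxx ?hk ?orbT.
Qed.

Lemma eta_pos (R : realFieldType) N (e : rel 'I_N) (eta : R) :
  (2 <= maxnbhd e)%N -> 1 - 2 / (maxnbhd e)%:R < eta -> 0 < eta.
Proof.
move=> hD h; apply: le_lt_trans h; rewrite subr_ge0 ler_pdivrMr ?mul1r ?ler_nat //.
by rewrite ltr0n; apply: leq_trans hD.
Qed.

Lemma pplus_pos (R : realFieldType) N (e : rel 'I_N) (eta : R) (w : state N) i j0 :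
  (2 <= maxnbhd e)%N -> 1 - 2 / (maxnbhd e)%:R < eta ->
  j0 \in nbhd e i -> w j0 -> 0 < pplus e eta w i.
Proof.
move=> hD h hj hw; have he := eta_pos hD h.
apply: clamp_gt0; apply: divr_gt0; last by rewrite mulr_gt0.
have hn : 0 < (#|nbhd e i|%:R : R) by rewrite ltr0n nb_gt0.
have h1 : 2 / (maxnbhd e)%:R - 1 <= avg R e w i.
  have hi : 0 <= (#|nbhd e i|%:R : R)^-1 by rewrite invr_ge0 ltW.
  rewrite /avg; apply: le_trans (ler_wpM2r hi (sum_lower R hj hw)).
  rewrite mulrBl divff ?gt_eqF // lerD2r; apply: ler_wpM2l => //.
  rewrite lef_pV2 ?posrE ?ler_nat ?nb_le //; by rewrite ltr0n; apply: leq_trans hD.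
have h2 : 0 < eta - (1 - 2 / (maxnbhd e)%:R) by rewrite subr_gt0.
apply: (lt_le_trans h2); rewrite opprB addrC lerD2r //.
Qed.

Lemma pplus_zero (R : realFieldType) N (e : rel 'I_N) (eta : R) (w : state N) i :
  0 < eta -> eta <= 1 -> (forall j, j \in nbhd e i -> w j = false) ->
  pplus e eta w i = 0.
Proof.
move=> he he1 h; rewrite /pplus (avg_const R h) /spin; apply: clamp_0.
apply: mulr_le0_ge0; first by rewrite addrC subr_le0.
by rewrite invr_ge0 ltW // mulr_gt0.
Qed.

Lemma pplus_one (R : realFieldType) N (e : rel 'I_N) (eta : R) (w : state N) i :
  0 < eta -> eta <= 1 -> (forall j, j \in nbhd e i -> w j = true) ->
  pplus e eta w i = 1.
Proof.
move=> he he1 h; rewrite /pplus (avg_const R h) /spin; apply: clamp_1.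
rewrite ler_pdivlMr ?mulr_gt0 // mul1r two_eq mulrDl mul1r lerD2r //.
Qed.


Definition grow N (e : rel 'I_N) (w : state N) : state N :=
  [ffun i => [exists j in nbhd e i, w j]].

Lemma trans_grow_pos (R : realFieldType) N (e : rel 'I_N) (eta : R) (w : state N) :
  (2 <= maxnbhd e)%N -> 1 - 2 / (maxnbhd e)%:R < eta -> eta <= 1 ->
  0 < trans e eta w (grow e w).
Proof.
move=> hD h he1; have he := eta_pos hD h.
rewrite /trans; apply: prodr_gt0 => i _; rewrite ffunE; case: ifPn.
  by case/exists_inP => j hj hw; apply: pplus_pos hj hw.
move=> hn; rewrite pplus_zero // ?subr0 ?ltr01 // => j hj.
by apply/negbTE; apply: contraNN hn => hw; apply/exists_inP; exists j.
Qed.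

Lemma grow_ge N (e : rel 'I_N) (w : state N) i : w i -> grow e w i.
Proof. by move=> hw; rewrite ffunE; apply/exists_inP; exists i; rewrite ?inE ?eqxx. Qed.

Lemma switch N (e : rel 'I_N) (w : state N) : symmetric e ->
  (forall i j : 'I_N, connect e i j) -> (exists i, w i) -> (exists j, ~~ w j) ->
  exists v, grow e w v && ~~ w v.
Proof.
move=> hs hc [i hi] [j hj]; case/connectP: (hc i j) => p hp hl; subst j.
elim: p i hi hp hj => [|b p IH] a ha /=; first by rewrite ha.
case/andP => hab hp hl; case: (boolP (w b)) => hb; first exact: IH hb hp hl.
exists b; rewrite hb andbT ffunE; apply/exists_inP; exists a => //.
by rewrite inE hs hab orbT.
Qed.

Lemma step (R : realFieldType) N (e : rel 'I_N) (eta : R) (x w : state N) m :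
  symmetric e -> (forall i j : 'I_N, connect e i j) ->
  (2 <= maxnbhd e)%N -> 1 - 2 / (maxnbhd e)%:R < eta -> eta <= 1 ->
  (exists i, x i) -> (exists j, ~~ w j) ->
  w != x -> (forall i, x i -> w i) -> 0 < avoid e eta x m w ->
  [/\ grow e w != x, (forall i, x i -> grow e w i),
      0 < avoid e eta x m.+1 (grow e w) &
      (#|[set i | ~~ grow e w i]| < #|[set i | ~~ w i]|)%N].
Proof.
move=> hs hc hD h he1 [i0 hi0] hj hwx hxw hA.
have [v /andP [hgv hwv]] := switch hs hc (ex_intro _ i0 (hxw _ hi0)) hj.
have hgx : grow e w != x.
  by apply/eqP => hg; move: hwv; rewrite hxw // -hg.
split => //.
- by move=> i /hxw /grow_ge.
- rewrite /= (negbTE hgx) (bigD1 w) //=.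
  apply: (lt_le_trans (mulr_gt0 hA (trans_grow_pos w hD h he1))); rewrite lerDl.
  by apply: sumr_ge0 => u _; apply: mulr_ge0; [apply: avoid_ge0|apply: trans_ge0].
- apply: proper_card; apply/properP; split.
    by apply/subsetP => i; rewrite !inE; apply: contraNN; apply: grow_ge.
  by exists v; rewrite !inE ?hwv ?hgv.
Qed.

Lemma reach (R : realFieldType) N (e : rel 'I_N) (eta : R) (x : state N) :
  symmetric e -> (forall i j : 'I_N, connect e i j) ->
  (2 <= maxnbhd e)%N -> 1 - 2 / (maxnbhd e)%:R < eta -> eta <= 1 ->
  (exists i, x i) -> forall n (w : state N) m,
  (#|[set i | ~~ w i]| <= n)%N -> w != x -> (forall i, x i -> w i) ->
  0 < avoid e eta x m w -> exists k, 0 < avoid e eta x k (all_plus N).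
Proof.
move=> hs hc hD h he1 hx; elim=> [|n IH] w m hn hwx hxw hA.
  case: (boolP [exists j, ~~ w j]) => [/existsP [j hj]|/existsPn hj].
    by move: hn; rewrite leqn0 cards_eq0 => /eqP/setP/(_ j); rewrite !inE hj.
  exists m; suff <- : w = all_plus N by [].
  by apply/ffunP => i; rewrite ffunE; apply/negPn/hj.
case: (boolP [exists j, ~~ w j]) => [/existsP hj|/existsPn hj].
  have [h1 h2 h3 h4] := step hs hc hD h he1 hx hj hwx hxw hA.
  by apply: (IH _ _ _ h1 h2 h3); rewrite -ltnS; apply: leq_trans h4 hn.
exists m; suff <- : w = all_plus N by [].
by apply/ffunP => i; rewrite ffunE; apply/negPn/hj.
Qed.

Theorem lemma1 (R : realFieldType) (N : nat) (e : rel 'I_N) (eta : R) :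
  (2 <= N)%N ->
  symmetric e -> irreflexive e ->
  (forall i j : 'I_N, connect e i j) ->
  1 - 2 / (maxnbhd e)%:R < eta -> eta <= 1 ->
  absorbing e eta (all_plus N) /\ absorbing e eta (all_minus N) /\
  (forall x : state N, x <> all_plus N -> x <> all_minus N -> transient e eta x).
Proof.
move=> hN hs hirr hc h he1.
have hD := D_ge2 hN hirr hc.
have he := eta_pos hD h.
have hP : absorbing e eta (all_plus N).
  rewrite /absorbing /trans big1 // => i _; rewrite ffunE pplus_one // => j _.
  by rewrite ffunE.
split => //; split.
  rewrite /absorbing /trans big1 // => i _; rewrite ffunE pplus_zero ?subr0 // => j _.
  by rewrite ffunE.
move=> x hxP hxM.
have hx : exists i, x i.
  case: (boolP [exists i, x i]) => [/existsP //|/existsPn hn].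
  by exfalso; apply: hxM; apply/ffunP => i; rewrite ffunE; apply/negbTE/hn.
have hx' : exists j, ~~ x j.
  case: (boolP [exists i, ~~ x i]) => [/existsP //|/existsPn hn].
  by exfalso; apply: hxP; apply/ffunP => i; rewrite ffunE; apply/negPn/hn.
have [v /andP [hgv hxv]] := switch hs hc hx hx'.
have hgx : grow e x != x by apply/eqP => hg; move: hxv; rewrite -hg hgv.
have hPx : all_plus N != x by apply/eqP => hh; apply: hxP.
have [k hk] : exists k, 0 < avoid e eta x k (all_plus N).
  apply: (reach hs hc hD h he1 hx (n := N) (m := 0) (w := grow e x)) => //.
  - by rewrite -[X in (_ <= X)%N]card_ord max_card.
  - by move=> i /grow_ge.
  - by rewrite /= (negbTE hgx) trans_grow_pos.
exact: transient_of hPx hP hk.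
Qed.
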